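(* Let $(\mathcal{X},\mathcal{B})$ be a $2$-IPPS$(4,v)$ such that (i) $|B_1\cap B_2|\le 2$ for all distinct $B_1,B_2\in\mathcal{B}$, and (ii) for every $B\in\mathcal{B}$ and every $x\in B$ there exists $B'\in\mathcal{B}\setminus\{B\}$ with $x\in B'$. Then $$\big|\{B\in\mathcal{B}:\ \exists\,B'\in\mathcal{B}\setminus\{B\}\text{ with }|B\cap B'|=2\}\big|\le v-1.$$
   Context: A $(w,v)$ set system is a pair $(\mathcal{X},\mathcal{B})$ with $|\mathcal{X}|=v$ and $\mathcal{B}$ a family of $w$-element subsets (blocks) of $\mathcal{X}$. For a $w$-subset $T\subseteq\mathcal{X}$ let $P_t(T)=\{\mathcal{P}\subseteq\mathcal{B}: |\mathcal{P}|\le t,\ T\subseteq\bigcup_{B\in\mathcal{P}}B\}$. The set system is a $t$-IPPS$(w,v)$ if for every $w$-subset $T\subseteq\mathcal{X}$, either $P_t(T)=\emptyset$ or $\bigcap_{\mathcal{P}\in P_t(T)}\mathcal{P}\neq\emptyset$. *)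

(* Defs.v *)
From mathcomp Require Import all_boot.
Set Implicit Arguments. Unset Strict Implicit. Unset Printing Implicit Defensive.

(* A (w,v) set system: point set X (a finType, v = #|X|) and a family of
   blocks Bs : {set {set X}}, each block of size w. *)
Definition set_system (X : finType) (w : nat) (Bs : {set {set X}}) : Prop :=
  forall B, B \in Bs -> #|B| = w.

Definition Pt (X : finType) (t : nat) (Bs : {set {set X}}) (T : {set X})
  : {set {set {set X}}} :=
  [set P in powerset Bs | (#|P| <= t) && (T \subset \bigcup_(B in P) B)].

Definition IPPS (X : finType) (t w : nat) (Bs : {set {set X}}) : Prop :=
  set_system w Bs /\
  forall T : {set X}, #|T| = w ->
    Pt t Bs T = set0 \/ exists B, forall P, P \in Pt t Bs T -> B \in P.

(* Main.v *)
Require Import Defs.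
From mathcomp Require Import all_boot.
Set Implicit Arguments. Unset Strict Implicit. Unset Printing Implicit Defensive.

Section L.
Variable X : finType.
Variable Bs : {set {set X}}.
Hypothesis HI : IPPS 2 4 Bs.

Lemma in_Pt (T : {set X}) B1 B2 : B1 \in Bs -> B2 \in Bs -> T \subset B1 :|: B2 ->
  [set B1; B2] \in Pt 2 Bs T.
Proof.
move=> h1 h2 hT; rewrite inE; apply/andP; split.
  by rewrite powersetE; apply/subsetP=> B; rewrite !inE => /orP[] /eqP->.
rewrite cards2; apply/andP; split; first by case: (B1 != B2).
apply/subsetP=> t /(subsetP hT); rewrite inE => /orP[] ht.
  by apply: (subsetP (bigcup_sup _ _)) ht; rewrite !inE eqxx.
by apply: (subsetP (bigcup_sup _ _)) ht; rewrite !inE eqxx orbT.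
Qed.

Lemma ipps_common (T : {set X}) B1 B2 : #|T| = 4 -> B1 \in Bs -> B2 \in Bs ->
  T \subset B1 :|: B2 ->
  exists W, forall C1 C2, C1 \in Bs -> C2 \in Bs -> T \subset C1 :|: C2 ->
    W = C1 \/ W = C2.
Proof.
move=> hT h1 h2 hc; case: HI => _ /(_ T hT) [].
  by move=> e; have := in_Pt h1 h2 hc; rewrite e inE.
move=> [W HW]; exists W => C1 C2 c1 c2 cc.
by have := HW _ (in_Pt c1 c2 cc); rewrite !inE => /orP[] /eqP ->; auto.
Qed.

Hypothesis H1 : forall B1 B2, B1 \in Bs -> B2 \in Bs -> B1 != B2 -> #|B1 :&: B2| <= 2.

Lemma E_disj B B' C C' y : B \in Bs -> B' \in Bs -> C \in Bs -> C' \in Bs ->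
  B != C -> B' != B -> C' != C -> #|B :&: B'| = 2 -> #|C :&: C'| = 2 ->
  y \in B :\: B' -> y \in C :\: C' -> False.
Proof.
move=> hB hB' hC hC' nBC nB'B nC'C cB cC.
rewrite !inE => /andP[yB' yB] /andP[yC' yC].
have nB'C : B' != C by apply/eqP => e; move: yB'; rewrite e yC.
have nC'B : C' != B by apply/eqP => e; move: yC'; rewrite e yB.
set D := B :&: B' in cB *.
have [sub|] := boolP (C :&: C' \subset D).
  have eD : C :&: C' = D.
    by apply/eqP; rewrite eqEcard sub cB cC.
  have : y |: D \subset B :&: C.
    apply/subsetP => t; rewrite !inE => /orP[/eqP->|]; first by rewrite yB yC.
    move=> /andP[tB tB']; rewrite tB /=.
    have : t \in C :&: C' by rewrite eD !inE tB tB'.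
    by rewrite inE => /andP[].
  move/subset_leq_card; rewrite cardsU1 cB !inE (negPf yB') andbF /=.
  by move=> h; have := leq_trans h (H1 hB hC nBC).
case/subsetPn => c' hc' c'D.
move: hc'; rewrite inE => /andP[c'C c'C'].
have nyc : y != c' by apply/eqP => e; move: yC'; rewrite e c'C'.
set T := y |: (c' |: D).
have cT : #|T| = 4.
  rewrite /T cardsU1 cardsU1 cB (negPf c'D).
  by rewrite in_setU1 negb_or nyc /D inE (negPf yB') andbF.
have T1 : T \subset B :|: C'.
  apply/subsetP => t; rewrite !inE => /orP[/eqP->|/orP[/eqP->|/andP[-> _]]].
  - by rewrite yB.
  - by rewrite c'C' orbT.
  - by [].
have T2 : T \subset B' :|: C.
  apply/subsetP => t; rewrite !inE => /orP[/eqP->|/orP[/eqP->|/andP[_ ->]]].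
  - by rewrite yC orbT.
  - by rewrite c'C orbT.
  - by [].
have T3 : T \subset B :|: C.
  apply/subsetP => t; rewrite !inE => /orP[/eqP->|/orP[/eqP->|/andP[-> _]]].
  - by rewrite yB.
  - by rewrite c'C orbT.
  - by [].
have [W HW] := ipps_common cT hB hC' T1.
have [e1|e1] := HW _ _ hB hC' T1; have [e2|e2] := HW _ _ hB' hC T2.
- by move: nB'B; rewrite -e1 -e2 eqxx.
- by move: nBC; rewrite -e1 -e2 eqxx.
- have [e3|e3] := HW _ _ hB hC T3.
  + by move: nC'B; rewrite -e1 -e3 eqxx.
  + by move: nC'C; rewrite -e1 -e3 eqxx.
- by move: nC'C; rewrite -e1 -e2 eqxx.
Qed.
End L.

From mathcomp Require Import zify.

Theorem lemma5 (X : finType) (v : nat) (Bs : {set {set X}}) :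
  #|X| = v ->
  IPPS 2 4 Bs ->
  (forall B1 B2, B1 \in Bs -> B2 \in Bs -> B1 != B2 -> #|B1 :&: B2| <= 2) ->
  (forall B x, B \in Bs -> x \in B -> exists2 B', B' \in Bs :\ B & x \in B') ->
  #|[set B in Bs | [exists B', (B' \in Bs :\ B) && (#|B :&: B'| == 2)]]| <= v - 1.
Proof.
move=> hv HI H1 _.
set S := [set B in Bs | _].
pose f B := [pick B' | (B' \in Bs :\ B) && (#|B :&: B'| == 2)].
pose E B := if f B is Some B' then B :\: B' else set0.
have hE : forall B, B \in S -> B \in Bs /\ exists B', [/\ B' \in Bs, B' != B, #|B :&: B'| = 2 & E B = B :\: B'].
  move=> B; rewrite inE => /andP[hB /existsP ex]; split => //; rewrite /E /f.
  case: pickP => [B' /andP[h1 /eqP h2]|none]; last by case: ex => x; rewrite none.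
  by move: h1; rewrite !inE => /andP[nB hB']; exists B'.
have cE : forall B, B \in S -> #|E B| = 2.
  move=> B /hE [hB [B' [_ _ h2 ->]]]; by rewrite cardsD h2 (HI.1 B hB).
have disj : forall B C x, B \in S -> C \in S -> x \in E B -> x \in E C -> B = C.
  move=> B C x /hE [hB [B' [hB' nB h2 ->]]] /hE [hC [C' [hC' nC h2' ->]]] xB xC.
  apply/eqP; apply/negPn/negP => nBC.
  exact: (E_disj HI H1 hB hB' hC hC' nBC nB nC h2 h2' xB xC).
have key : #|S| * 2 <= v.
  rewrite -sum_nat_const.
  rewrite (eq_bigr (fun B => \sum_x (x \in E B))); last first.
    move=> B hB; rewrite -(cE B hB) -sum1_card big_mkcond /=.
    by apply: eq_bigr => x _; case: (x \in E B).
  rewrite exchange_big /= -hv -sum1_card.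
  apply: leq_sum => x _.
  case: (boolP [exists B in S, x \in E B]).
    case/exists_inP => B0 hB0 xB0.
    rewrite (bigD1 B0) //= xB0 big1 //.
    move=> B /andP[hB nB]; case xB: (x \in E B) => //.
    by move: nB; rewrite (disj _ _ _ hB hB0 xB xB0) eqxx.
  move=> nex; rewrite big1 // => B hB; case xB: (x \in E B) => //.
  by case/negP: nex; apply/exists_inP; exists B.
lia.
Qed.
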